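(* Let $\alpha,\beta$ be sets, $z\in\beta$, $\mathit{seq}:\beta\times\alpha\to\beta$ and $\mathit{comb}:\beta\times\beta\to\beta$, written $x\oplus y=\mathit{comb}(x,y)$. Let $\Gamma=\{\mathrm{foldl}(\mathit{seq},z,L) : L \text{ a finite list over }\alpha\}$. Then calls $\mathrm{aggregate}(z,\mathit{seq},\mathit{comb},\mathit{rdd})$ have deterministic outcomes if and only if (1) $(\Gamma,\oplus,z)$ is a commutative monoid (i.e. $\oplus$ maps $\Gamma\times\Gamma$ into $\Gamma$, is associative and commutative on $\Gamma$, with identity $z$ on $\Gamma$), and (2) for all $d\in\alpha$ and $e\in\Gamma$, $\mathit{seq}(e,d)=e\oplus\mathit{seq}(z,d)$.
   Context: Lists are finite; $\mathbin{+\!\!+}$ is list concatenation. For $f:B\times A\to B$, $b\in B$: $\mathrm{foldl}(f,b,[\,])=b$ and $\mathrm{foldl}(f,b,[x_1,\dots,x_n])=f(\cdots f(f(b,x_1),x_2)\cdots,x_n)$. An RDD over $\alpha$ is a list of lists over $\alpha$. A partitioning is a function $P$ sending each list $L$ over $\alpha$ to an RDD obtained by splitting $L$ into consecutive (possibly empty) pieces $p_1,\dots,p_n$ with $p_1\mathbin{+\!\!+}\cdots\mathbin{+\!\!+}p_n=L$ and then arbitrarily permuting $[p_1,\dots,p_n]$. Define $\mathrm{aggregate}_{\mathrm{det}}(z,\mathit{seq},\mathit{comb},[q_1,\dots,q_m])=\mathrm{foldl}(\mathit{comb},z,[\mathrm{foldl}(\mathit{seq},z,q_1),\dots,\mathrm{foldl}(\mathit{seq},z,q_m)])$.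 Calls $\mathrm{aggregate}(z,\mathit{seq},\mathit{comb},\mathit{rdd})$ have deterministic outcomes if $\mathrm{aggregate}_{\mathrm{det}}(z,\mathit{seq},\mathit{comb},P(L))=\mathrm{foldl}(\mathit{seq},z,L)$ for all lists $L$ over $\alpha$ and all partitionings $P$. *)

(* Defs.v *)
From Stdlib Require Import List Permutation.
Import ListNotations.

Definition foldl {A B : Type} (f : B -> A -> B) (b : B) (l : list A) : B :=
  fold_left f l b.

Definition rdd (A : Type) : Type := list (list A).

Definition is_partition_of {A : Type} (L : list A) (r : rdd A) : Prop :=
  exists ps : list (list A), concat ps = L /\ Permutation ps r.

Definition partitioning {A : Type} (P : list A -> rdd A) : Prop :=
  forall L, is_partition_of L (P L).

Definition aggregate_det {A B : Type} (z : B) (sq : B -> A -> B)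
  (comb : B -> B -> B) (r : rdd A) : B :=
  foldl comb z (map (fun q => foldl sq z q) r).

Definition deterministic {A B : Type} (z : B) (sq : B -> A -> B)
  (comb : B -> B -> B) : Prop :=
  forall P : list A -> rdd A, partitioning P ->
  forall L : list A, aggregate_det z sq comb (P L) = foldl sq z L.

Definition Gamma {A B : Type} (z : B) (sq : B -> A -> B) (e : B) : Prop :=
  exists L : list A, e = foldl sq z L.

Definition comm_monoid_on {B : Type} (G : B -> Prop) (op : B -> B -> B) (z : B)
  : Prop :=
  (forall x y, G x -> G y -> G (op x y)) /\
  (forall x y w, G x -> G y -> G w -> op (op x y) w = op x (op y w)) /\
  (forall x y, G x -> G y -> op x y = op y x) /\
  G z /\
  (forall x, G x -> op z x = x /\ op x z = x).

(* Main.v *)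
Require Import Defs.
From Stdlib Require Import List Permutation Arith.
Import ListNotations.

Section S.
Context {A B : Type} (z : B) (sq : B -> A -> B) (comb : B -> B -> B).
Let g (l : list A) := foldl sq z l.
Let G := Gamma z sq.

Lemma foldl_app_ (l1 l2 : list A) e : foldl sq e (l1 ++ l2) = foldl sq (foldl sq e l1) l2.
Proof. unfold foldl. apply fold_left_app. Qed.

Lemma Pk_part (k : nat) : partitioning (fun L : list A => [firstn k L; skipn k L]).
Proof. intro L. exists [firstn k L; skipn k L]. split; [|apply Permutation_refl].
  simpl. rewrite app_nil_r. apply firstn_skipn. Qed.

Lemma Pk'_part (k : nat) : partitioning (fun L : list A => [skipn k L; firstn k L]).
Proof. intro L. exists [firstn k L; skipn k L]. split; [|apply perm_swap].
  simpl. rewrite app_nil_r. apply firstn_skipn. Qed.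

Lemma P1_part : partitioning (fun L : list A => [L]).
Proof. intro L. exists [L]. split; [simpl; apply app_nil_r | apply Permutation_refl]. Qed.

Section Conv.
Hypothesis HM : comm_monoid_on G comb z.
Hypothesis H2 : forall (d : A) (e : B), G e -> sq e d = comb e (sq z d).

Lemma G_g l : G (g l). Proof. exists l. reflexivity. Qed.

Lemma fold_e q : forall e, G e -> foldl sq e q = comb e (g q).
Proof.
  destruct HM as (Hcl & Has & Hco & Hz & Hid).
  induction q as [|d q IH]; intros e He.
  - simpl. unfold g; simpl. symmetry. apply (Hid e He).
  - change (foldl sq (sq e d) q = comb e (foldl sq (sq z d) q)).
    assert (Gd : G (sq z d)) by (exists [d]; reflexivity).
    rewrite (H2 d e He). rewrite IH by (apply Hcl; auto).
    rewrite (IH (sq z d) Gd). apply Has; auto. apply G_g.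
Qed.

Lemma g_app l1 l2 : g (l1 ++ l2) = comb (g l1) (g l2).
Proof. unfold g at 1. rewrite foldl_app_. apply fold_e. apply G_g. Qed.

Lemma g_perm r1 r2 : Permutation r1 r2 -> g (concat r1) = g (concat r2).
Proof.
  destruct HM as (Hcl & Has & Hco & Hz & Hid).
  induction 1; simpl; auto.
  - rewrite !g_app, IHPermutation. reflexivity.
  - rewrite !g_app. rewrite <- !Has by apply G_g. f_equal. apply Hco; apply G_g.
  - congruence.
Qed.

Lemma fold_comb r : forall e, G e ->
  foldl comb e (map (fun q => foldl sq z q) r) = comb e (g (concat r)).
Proof.
  destruct HM as (Hcl & Has & Hco & Hz & Hid).
  induction r as [|x r IH]; intros e He.
  - simpl. unfold g; simpl. symmetry. apply (Hid e He).
  - change (foldl comb (comb e (g x)) (map (fun q => foldl sq z q) r) = comb e (g (x ++ concat r))).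
    rewrite IH by (apply Hcl; auto; apply G_g).
    rewrite g_app. apply Has; auto; apply G_g.
Qed.
End Conv.
End S.

Theorem corollary1 (A B : Type) (z : B) (sq : B -> A -> B) (comb : B -> B -> B) :
  deterministic z sq comb <->
  (comm_monoid_on (Gamma z sq) comb z /\
   (forall (d : A) (e : B), Gamma z sq e -> sq e d = comb e (sq z d))).
Proof.
  split.
  - intro D.
    assert (Hzz : comb z z = z).
    { pose proof (D _ P1_part []) as E. exact E. }
    assert (Happ : forall l1 l2 : list A,
      comb (foldl sq z l1) (foldl sq z l2) = foldl sq z (l1 ++ l2)).
    { intros l1 l2. pose proof (D _ (Pk_part (length l1)) (l1 ++ l2)) as E.
      unfold aggregate_det in E. simpl in E.
      rewrite firstn_app, skipn_app, Nat.sub_diag, firstn_all, skipn_all in E.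
      simpl in E. rewrite app_nil_r in E.
      rewrite <- E. f_equal.
      assert (HH: comb z (foldl sq z l1) = foldl sq z l1).
      { pose proof (D _ P1_part l1) as E1. exact E1. }
      exact (eq_sym HH). }
    assert (Happ' : forall l1 l2 : list A,
      comb (foldl sq z l2) (foldl sq z l1) = foldl sq z (l1 ++ l2)).
    { intros l1 l2. pose proof (D _ (Pk'_part (length l1)) (l1 ++ l2)) as E.
      unfold aggregate_det in E. simpl in E.
      rewrite firstn_app, skipn_app, Nat.sub_diag, firstn_all, skipn_all in E.
      simpl in E. rewrite app_nil_r in E.
      rewrite <- E. f_equal.
      assert (HH: comb z (foldl sq z l2) = foldl sq z l2).
      { pose proof (D _ P1_part l2) as E1. exact E1. }
      exact (eq_sym HH). }
    split; [split; [|split; [|split; [|split]]]|].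
    + intros x y [l1 ->] [l2 ->]. exists (l1 ++ l2). auto.
    + intros x y w [l1 ->] [l2 ->] [l3 ->]. rewrite !Happ, app_assoc. reflexivity.
    + intros x y [l1 ->] [l2 ->]. rewrite Happ, Happ'. reflexivity.
    + exists []. reflexivity.
    + intros x [l ->]. split.
      * pose proof (Happ [] l) as E. exact E.
      * pose proof (Happ l []) as E. rewrite app_nil_r in E. exact E.
    + intros d e [l ->]. pose proof (Happ l [d]) as E. change (sq z d) with (foldl sq z [d]). rewrite E.
      unfold foldl. rewrite fold_left_app. reflexivity.
  - intros [HM H2] P HP L. destruct (HP L) as [ps [Hc Hp]].
    unfold aggregate_det. rewrite (fold_comb z sq comb HM H2).
    2: { destruct HM as (_&_&_&Hz&_). exact Hz. }
    rewrite <- (g_perm z sq comb HM H2 _ _ Hp), Hc.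
    destruct HM as (_&_&_&_&Hid). apply Hid. exists L. reflexivity.
Qed.
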